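(* Let $f:\Delta^2\to\mathbb R$ be a smooth, $T\ltimes\mathcal S_2$-invariant, strictly plurisubharmonic function and let $r,s\in\mathbb R$. Let $\tilde f:\mathbb R^2\to\mathbb R$, $\tilde f(a_1,a_2)=f(\tanh a_1,\tanh a_2)$ (a $W_{\mathbb R^2}$-invariant function), and for $\sinh^2a_1\neq\sinh^2a_2$ define $$G_{\tilde f}(a_1,a_2)=\frac{r\sinh(2a_1)\frac{\partial\tilde f}{\partial a_1}(a_1,a_2)-s\sinh(2a_2)\frac{\partial\tilde f}{\partial a_2}(a_1,a_2)}{\sinh^2a_1-\sinh^2a_2}.$$ Then: (i) $\frac{\partial\tilde f}{\partial a_1}(a_1,a_2)>0$ whenever $a_1>0$ and $<0$ whenever $a_1<0$; in particular $\frac{\partial\tilde f}{\partial a_1}(0,a_2)=0$ for all $a_2\in\mathbb R$. (ii) $\frac{\partial\tilde f}{\partial a_2}(a_1,a_2)=\frac{\partial\tilde f}{\partial a_1}(a_2,a_1)$; in particular $\frac{\partial\tilde f}{\partial a_2}(a_1,0)=0$ for all $a_1$. (iii) If $G_{\tilde f}$ extends continuously to a strictly positive function on $\mathbb R^2$, then $r=s>0$; in particular $G_{\tilde f}$ is then $W_{\mathbb R^2}$-invariant.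
   Context: $\Delta$ is the unit disc in $\mathbb C$ and $\Delta^2$ the unit bidisc. $T=(S^1)^2$ acts on $\Delta^2$ by coordinatewise rotations and $\mathcal S_2$ by permutation of the two coordinates. $W_{\mathbb R^2}=(\mathbb Z_2)^2\rtimes\mathcal S_2$ acts on $\mathbb R^2$ by signed permutations of the coordinates. *)

(* Defs.v *)
From Stdlib Require Import Reals Lra ClassicalEpsilon.
Open Scope R_scope.

(* C is modelled as R*R (real part, imaginary part); C^2 as C*C. *)
Definition Cx : Type := (R * R)%type.
Definition C2 : Type := (Cx * Cx)%type.

Definition Cmul (a b : Cx) : Cx :=
  (fst a * fst b - snd a * snd b, fst a * snd b + snd a * fst b).
Definition Cconj (a : Cx) : Cx := (fst a, - snd a).
Definition Cnorm2 (a : Cx) : R := fst a * fst a + snd a * snd a.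

(* real coordinates of (z1,z2) = (x1 + i y1, x2 + i y2):
   0 = x1, 1 = y1, 2 = x2, 3 = y2 *)
Definition coord (p : C2) (i : nat) : R :=
  match i with
  | O => fst (fst p)
  | 1%nat => snd (fst p)
  | 2%nat => fst (snd p)
  | _ => snd (snd p)
  end.

Definition upd (p : C2) (i : nat) (t : R) : C2 :=
  match i with
  | O => ((t, snd (fst p)), snd p)
  | 1%nat => ((fst (fst p), t), snd p)
  | 2%nat => (fst p, (t, snd (snd p)))
  | _ => (fst p, (fst (snd p), t))
  end.

Definition bidisc (p : C2) : Prop := Cnorm2 (fst p) < 1 /\ Cnorm2 (snd p) < 1.

Definition has_pd (g : C2 -> R) (i : nat) (p : C2) (l : R) : Prop :=
  derivable_pt_lim (fun t => g (upd p i t)) (coord p i) l.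

Definition pd (g : C2 -> R) (i : nat) (p : C2) : R :=
  epsilon (inhabits 0) (fun l => has_pd g i p l).

Definition cont_at (g : C2 -> R) (p : C2) : Prop :=
  forall eps, 0 < eps -> exists delta, 0 < delta /\
    forall q, (forall i, (i < 4)%nat -> Rabs (coord q i - coord p i) < delta) ->
      Rabs (g q - g p) < eps.

Fixpoint Ck_bidisc (k : nat) (g : C2 -> R) : Prop :=
  (forall p, bidisc p -> cont_at g p) /\
  match k with
  | O => True
  | S k' => forall i, (i < 4)%nat ->
      (forall p, bidisc p -> exists l, has_pd g i p l) /\ Ck_bidisc k' (pd g i)
  end.

Definition smooth_bidisc (g : C2 -> R) : Prop := forall k, Ck_bidisc k g.

(* second real derivative  d_a d_b g  (first d_b, then d_a) *)
Definition pd2 (g : C2 -> R) (a b : nat) (p : C2) : R := pd (pd g b) a p.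

(* d^2 g / (dz_j d zbar_k), j,k in {0,1};
   = 1/4 (d_{x_j} - i d_{y_j})(d_{x_k} + i d_{y_k}) g *)
Definition ddbar (g : C2 -> R) (j k : nat) (p : C2) : Cx :=
  let xj := (2 * j)%nat in let yj := (2 * j + 1)%nat in
  let xk := (2 * k)%nat in let yk := (2 * k + 1)%nat in
  (/ 4 * (pd2 g xj xk p + pd2 g yj yk p),
   / 4 * (pd2 g xj yk p - pd2 g yj xk p)).

Definition wcomp (w : C2) (j : nat) : Cx :=
  match j with O => fst w | _ => snd w end.

Definition levi (g : C2 -> R) (p : C2) (w : C2) : R :=
  fst (Cmul (ddbar g 0 0 p) (Cmul (wcomp w 0) (Cconj (wcomp w 0)))) +
  fst (Cmul (ddbar g 0 1 p) (Cmul (wcomp w 0) (Cconj (wcomp w 1)))) +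
  fst (Cmul (ddbar g 1 0 p) (Cmul (wcomp w 1) (Cconj (wcomp w 0)))) +
  fst (Cmul (ddbar g 1 1 p) (Cmul (wcomp w 1) (Cconj (wcomp w 1)))).

Definition strictly_psh_bidisc (g : C2 -> R) : Prop :=
  forall p, bidisc p -> forall w : C2, w <> ((0, 0), (0, 0)) -> 0 < levi g p w.

(* rotation z |-> e^{i theta} z *)
Definition rot (theta : R) (z : Cx) : Cx :=
  (cos theta * fst z - sin theta * snd z, sin theta * fst z + cos theta * snd z).

Definition T_invariant (g : C2 -> R) : Prop :=
  forall p th1 th2, bidisc p -> g (rot th1 (fst p), rot th2 (snd p)) = g p.

Definition S2_invariant (g : C2 -> R) : Prop :=
  forall p, bidisc p -> g (snd p, fst p) = g p.

Definition ftilde (g : C2 -> R) (a1 a2 : R) : R := g ((tanh a1, 0), (tanh a2, 0)).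

Definition D1 (h : R -> R -> R) (a1 a2 : R) : R :=
  epsilon (inhabits 0) (fun l => derivable_pt_lim (fun t => h t a2) a1 l).
Definition D2 (h : R -> R -> R) (a1 a2 : R) : R :=
  epsilon (inhabits 0) (fun l => derivable_pt_lim (fun t => h a1 t) a2 l).

Definition Gfun (r s : R) (h : R -> R -> R) (a1 a2 : R) : R :=
  (r * sinh (2 * a1) * D1 h a1 a2 - s * sinh (2 * a2) * D2 h a1 a2)
  / (sinh a1 ^ 2 - sinh a2 ^ 2).

Definition cont2 (H : R -> R -> R) : Prop :=
  forall a1 a2 eps, 0 < eps -> exists delta, 0 < delta /\
    forall b1 b2, Rabs (b1 - a1) < delta -> Rabs (b2 - a2) < delta ->
      Rabs (H b1 b2 - H a1 a2) < eps.

(* Main.v *)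
Require Import Defs.
From Stdlib Require Import Reals Lra ClassicalEpsilon FunctionalExtensionality.
Open Scope R_scope.

Lemma cpt_intro f x :
  (forall eps, 0 < eps -> exists d, 0 < d /\ forall y, Rabs (y - x) < d -> Rabs (f y - f x) < eps) ->
  continuity_pt f x.
Proof.
  intros H eps He. destruct (H eps He) as [d [Hd Hy]].
  exists d; split; [lra|]. intros y [_ Hy2]. simpl in *. unfold R_dist in *. apply Hy; auto.
Qed.

Lemma cpt_elim f x : continuity_pt f x ->
  forall eps, 0 < eps -> exists d, 0 < d /\ forall y, Rabs (y - x) < d -> Rabs (f y - f x) < eps.
Proof.
  intros H eps He. destruct (H eps He) as [d [Hd Hy]].
  exists d; split; [lra|]. intros y Hy2.
  destruct (Req_dec y x) as [->|Hne].
  - unfold Rminus; rewrite Rplus_opp_r, Rabs_R0; lra.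
  - apply (Hy y). split; [split; [exact I| auto] | exact Hy2].
Qed.

Lemma agree_at0 u v : continuity_pt u 0 -> continuity_pt v 0 ->
  (forall t, 0 < t -> u t = v t) -> u 0 = v 0.
Proof.
  intros Hu Hv Huv. destruct (Req_dec (u 0) (v 0)) as [|Hne]; auto.
  exfalso. set (e := Rabs (u 0 - v 0) / 2).
  assert (He : 0 < e). { unfold e. assert (0 < Rabs (u 0 - v 0)) by (apply Rabs_pos_lt; lra). lra. }
  destruct (cpt_elim _ _ Hu e He) as [d1 [Hd1 H1]].
  destruct (cpt_elim _ _ Hv e He) as [d2 [Hd2 H2]].
  set (t := Rmin d1 d2 / 2).
  assert (Ht : 0 < t) by (unfold t; apply Rmin_case; lra).
  assert (Ht1 : t < d1) by (unfold t; generalize (Rmin_l d1 d2); lra).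
  assert (Ht2 : t < d2) by (unfold t; generalize (Rmin_r d1 d2); lra).
  assert (A : Rabs (t - 0) < d1) by (rewrite Rminus_0_r, Rabs_pos_eq; lra).
  assert (B : Rabs (t - 0) < d2) by (rewrite Rminus_0_r, Rabs_pos_eq; lra).
  specialize (H1 t A). specialize (H2 t B). rewrite (Huv t Ht) in H1.
  assert (Rabs (u 0 - v 0) <= Rabs (v t - u 0) + Rabs (v t - v 0)).
  { replace (u 0 - v 0) with (-(v t - u 0) + (v t - v 0)) by ring.
    eapply Rle_trans; [apply Rabs_triang|]. rewrite Rabs_Ropp; lra. }
  unfold e in *; lra.
Qed.

Lemma deriv_unique_eps (g : R -> R) x l :
  derivable_pt_lim g x l -> epsilon (inhabits 0) (fun l => derivable_pt_lim g x l) = l.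
Proof.
  intros H. apply (uniqueness_limite g x). 2: exact H.
  apply (epsilon_spec (inhabits 0) (fun l => derivable_pt_lim g x l)). eauto.
Qed.

Lemma pd_eq g i p l : has_pd g i p l -> pd g i p = l.
Proof. intros H. unfold pd, has_pd in *. apply deriv_unique_eps; auto. Qed.

Lemma pd_spec g i p : (exists l, has_pd g i p l) -> has_pd g i p (pd g i p).
Proof. intros [l H]. rewrite (pd_eq _ _ _ _ H). auto. Qed.

Lemma D1_eq h a1 a2 l : derivable_pt_lim (fun t => h t a2) a1 l -> D1 h a1 a2 = l.
Proof. apply deriv_unique_eps. Qed.
Lemma D2_eq h a1 a2 l : derivable_pt_lim (fun t => h a1 t) a2 l -> D2 h a1 a2 = l.
Proof. apply deriv_unique_eps. Qed.

Lemma deriv_local (f1 f2 g : R -> R) t l :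
  continuity_pt g t -> g t < 1 -> (forall y, g y < 1 -> f1 y = f2 y) ->
  derivable_pt_lim f1 t l -> derivable_pt_lim f2 t l.
Proof.
  intros Hg Hgt Heq Hd eps He.
  destruct (Hd eps He) as [d Hd'].
  destruct (cpt_elim _ _ Hg (1 - g t)) as [d2 [Hd2 H2]]; [lra|].
  assert (Hm : 0 < Rmin d d2) by (apply Rmin_case; [apply cond_pos|lra]).
  exists (mkposreal _ Hm). intros h Hh Hhd. simpl in Hhd.
  assert (Hh1 : Rabs h < d) by (generalize (Rmin_l d d2); lra).
  assert (Hh2 : Rabs (t + h - t) < d2) by (replace (t+h-t) with h by ring; generalize (Rmin_r d d2); lra).
  specialize (H2 _ Hh2).
  assert (g (t+h) < 1). { apply Rabs_def2 in H2. lra. }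
  rewrite <- (Heq (t+h)), <- (Heq t); auto.
Qed.

Lemma deriv_tmul (h : R -> R) : continuity_pt h 0 ->
  derivable_pt_lim (fun t => t * h t) 0 (h 0).
Proof.
  intros Hc eps He. destruct (cpt_elim _ _ Hc eps He) as [d [Hd H]].
  exists (mkposreal _ Hd). intros k Hk Hkd. simpl in Hkd.
  replace ((0 + k) * h (0 + k) - 0 * h 0) with (k * h k) by (rewrite Rplus_0_l; ring).
  replace (k * h k / k - h 0) with (h k - h 0) by (field; auto).
  apply H. rewrite Rminus_0_r; auto.
Qed.

Lemma even_deriv (k : R -> R) a l : (forall t, k (- t) = k t) ->
  derivable_pt_lim k a l -> derivable_pt_lim k (- a) (- l).
Proof.
  intros He Hd.
  assert (H : derivable_pt_lim (comp k (fun t => - t)) (- a) (l * -1)).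
  { apply derivable_pt_lim_comp.
    - replace (-1) with (- 1) by ring. apply derivable_pt_lim_opp, derivable_pt_lim_id.
    - rewrite Ropp_involutive; auto. }
  replace (- l) with (l * -1) by ring.
  replace k with (comp k (fun t => - t)); auto.
  apply functional_extensionality; intro t; unfold comp; apply He.
Qed.

Lemma cosh_pos x : 0 < cosh x.
Proof. unfold cosh. generalize (exp_pos x) (exp_pos (-x)); lra. Qed.

Lemma cosh_sinh x : cosh x * cosh x - sinh x * sinh x = 1.
Proof. unfold cosh, sinh. rewrite exp_Ropp. generalize (exp_pos x); intro. field. lra. Qed.

Lemma deriv_tanh x : derivable_pt_lim tanh x (/ (cosh x * cosh x)).
Proof.
  assert (H := derivable_pt_lim_div sinh cosh x _ _ (derivable_pt_lim_sinh x)
     (derivable_pt_lim_cosh x) (Rgt_not_eq _ _ (cosh_pos x))).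
  change tanh with (sinh / cosh)%F.
  replace (/ (cosh x * cosh x)) with ((cosh x * cosh x - sinh x * sinh x) / (cosh x)²); auto.
  rewrite cosh_sinh. unfold Rsqr. field. generalize (cosh_pos x); lra.
Qed.

Lemma cont_tanh x : continuity_pt tanh x.
Proof. apply derivable_continuous_pt. exists (/ (cosh x * cosh x)). apply deriv_tanh. Qed.

Lemma tanh_bound x : tanh x * tanh x + 0 * 0 < 1.
Proof.
  unfold tanh, sinh, cosh. generalize (exp_pos x) (exp_pos (-x)); intros A B.
  set (a := exp x) in *; set (b := exp (-x)) in *.
  replace ((a - b) / 2 / ((a + b) / 2) * ((a - b) / 2 / ((a + b) / 2)) + 0 * 0)
    with ((a - b) * (a - b) / ((a + b) * (a + b))) by (field; lra).
  apply Rmult_lt_reg_r with ((a+b)*(a+b)). nra.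
  unfold Rdiv. rewrite Rmult_assoc, Rinv_l by nra. nra.
Qed.

Lemma tanh_opp x : tanh (- x) = - tanh x.
Proof. unfold tanh, sinh, cosh. rewrite Ropp_involutive. field.
  generalize (exp_pos x) (exp_pos (-x)); lra. Qed.

Lemma sinh_pos x : 0 < x -> 0 < sinh x.
Proof. intros. rewrite <- sinh_0. apply sinh_lt; auto. Qed.

Lemma tanh_pos x : 0 < x -> 0 < tanh x.
Proof. intros. unfold tanh. apply Rdiv_lt_0_compat. apply sinh_pos; auto. apply cosh_pos. Qed.

Lemma sinh_opp x : sinh (- x) = - sinh x.
Proof. unfold sinh. rewrite Ropp_involutive. field. Qed.

Lemma sm_pd f i p : smooth_bidisc f -> (i < 4)%nat -> bidisc p -> has_pd f i p (pd f i p).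
Proof.
  intros Hs Hi Hp. destruct (Hs 1%nat) as [_ H]. destruct (H i Hi) as [H1 _].
  apply pd_spec; auto.
Qed.

Lemma sm_cont1 f i p : smooth_bidisc f -> (i < 4)%nat -> bidisc p -> cont_at (pd f i) p.
Proof.
  intros Hs Hi Hp. destruct (Hs 1%nat) as [_ H]. destruct (H i Hi) as [_ [H2 _]]. auto.
Qed.

Lemma sm_pd2 f i j p : smooth_bidisc f -> (i < 4)%nat -> (j < 4)%nat -> bidisc p ->
  has_pd (pd f i) j p (pd2 f j i p).
Proof.
  intros Hs Hi Hj Hp. destruct (Hs 2%nat) as [_ H]. destruct (H i Hi) as [_ [_ H2]].
  destruct (H2 j Hj) as [H3 _]. apply pd_spec; auto.
Qed.

Lemma deriv_rho x t : 0 < x -> derivable_pt_lim (fun y => sqrt (x * x + y * y)) t (t / sqrt (x * x + t * t)).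
Proof.
  intros Hx.
  assert (Hpos : 0 < x * x + t * t) by nra.
  assert (H1 : derivable_pt_lim (fun y => x * x + y * y) t (0 + (1 * t + t * 1))).
  { apply (derivable_pt_lim_plus (fun _ => x * x) (fun y => y * y)).
    apply derivable_pt_lim_const.
    apply (derivable_pt_lim_mult id id); apply derivable_pt_lim_id. }
  assert (H2 := derivable_pt_lim_comp _ sqrt t _ _ H1 (derivable_pt_lim_sqrt _ Hpos)).
  unfold comp in H2.
  replace (t / sqrt (x * x + t * t)) with (/ (2 * sqrt (x * x + t * t)) * (0 + (1 * t + t * 1))); auto.
  assert (0 < sqrt (x * x + t * t)) by (apply sqrt_lt_R0; auto). field; lra.
Qed.

Lemma cont_rho x : 0 < x -> continuity_pt (fun y => sqrt (x * x + y * y)) 0.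
Proof. intros. apply derivable_continuous_pt. eexists. apply deriv_rho; auto. Qed.

Lemma cont_quad x t : continuity_pt (fun y => x * x + y * y) t.
Proof.
  apply derivable_continuous_pt. exists (0 + (1 * t + t * 1)).
  apply (derivable_pt_lim_plus (fun _ => x * x) (fun y => y * y)).
  apply derivable_pt_lim_const.
  apply (derivable_pt_lim_mult id id); apply derivable_pt_lim_id.
Qed.

Lemma rot_identity f x y b : T_invariant f -> 0 < x -> x * x + y * y < 1 -> b * b < 1 ->
  f ((x, y), (b, 0)) = f ((sqrt (x * x + y * y), 0), (b, 0)).
Proof.
  intros HT Hx Hxy Hb.
  set (rho := sqrt (x * x + y * y)).
  assert (Hrp : bidisc ((rho, 0), (b, 0))).
  { unfold bidisc, Cnorm2; simpl. unfold rho. rewrite sqrt_sqrt by nra. lra. }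
  rewrite <- (HT _ (atan (y / x)) 0 Hrp). f_equal.
  unfold rot; simpl. rewrite cos_0, sin_0, sin_atan, cos_atan.
  set (s := sqrt (1 + (y / x)²)).
  assert (Hs : 0 < s) by (apply sqrt_lt_R0; unfold Rsqr; nra).
  assert (Hss : s * s = 1 + (y / x) * (y / x)) by (unfold s; rewrite sqrt_sqrt; unfold Rsqr; nra).
  assert (Hr : rho = s * x).
  { unfold rho. replace (x * x + y * y) with ((s * x) * (s * x)).
    apply sqrt_square; nra. replace ((s*x)*(s*x)) with ((s*s)*(x*x)) by ring. rewrite Hss. field. lra. }
  rewrite Hr. apply injective_projections; simpl; (apply injective_projections; simpl; [field|field]); lra.
Qed.

Lemma pd1_formula f x t b : smooth_bidisc f -> T_invariant f -> 0 < x -> x * x + t * t < 1 -> b * b < 1 ->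
  pd f 1 ((x, t), (b, 0)) =
  t * (pd f 0 ((sqrt (x * x + t * t), 0), (b, 0)) / sqrt (x * x + t * t)).
Proof.
  intros Hs HT Hx Hxt Hb. apply pd_eq. unfold has_pd; simpl.
  set (rho := fun y => sqrt (x * x + y * y)).
  assert (Hr : 0 < rho t) by (apply sqrt_lt_R0; nra).
  assert (Hrr : rho t * rho t = x * x + t * t) by (apply sqrt_sqrt; nra).
  apply (deriv_local (comp (fun z => f ((z, 0), (b, 0))) rho) _ (fun y => x * x + y * y)).
  - apply cont_quad.
  - auto.
  - intros y Hy. unfold comp, rho. symmetry. apply rot_identity; auto.
  - replace (t * (pd f 0 (sqrt (x * x + t * t), 0, (b, 0)) / sqrt (x * x + t * t)))
      with (pd f 0 ((rho t, 0), (b, 0)) * (t / rho t)) by (unfold rho; field; fold (rho t); lra).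
    apply derivable_pt_lim_comp.
    + apply deriv_rho; auto.
    + assert (Hbd : bidisc ((rho t, 0), (b, 0))) by (unfold bidisc, Cnorm2; simpl; lra).
      exact (sm_pd f 0 _ Hs ltac:(auto) Hbd).
Qed.

Lemma cont_line0 g b x : cont_at g ((x, 0), (b, 0)) -> continuity_pt (fun z => g ((z, 0), (b, 0))) x.
Proof.
  intros H. apply cpt_intro. intros eps He. destruct (H eps He) as [d [Hd Hq]].
  exists d; split; auto. intros y Hy. apply Hq. intros i Hi.
  destruct i as [|[|[|[|i]]]]; simpl; auto; unfold Rminus; rewrite Rplus_opp_r, Rabs_R0; auto.
Qed.

Lemma pd2_11 f x b : smooth_bidisc f -> T_invariant f -> 0 < x -> x < 1 -> b * b < 1 ->
  pd2 f 1 1 ((x, 0), (b, 0)) = pd f 0 ((x, 0), (b, 0)) / x.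
Proof.
  intros Hs HT Hx Hx1 Hb. unfold pd2. apply pd_eq. unfold has_pd; simpl.
  set (h := fun t => pd f 0 ((sqrt (x * x + t * t), 0), (b, 0)) / sqrt (x * x + t * t)).
  assert (Hsq : sqrt (x * x + 0 * 0) = x) by (rewrite Rmult_0_l, Rplus_0_r; apply sqrt_square; lra).
  replace (pd f 0 (x, 0, (b, 0)) / x) with (h 0) by (unfold h; rewrite Hsq; auto).
  apply (deriv_local (fun t => t * h t) _ (fun y => x * x + y * y)).
  - apply cont_quad.
  - nra.
  - intros y Hy. unfold h. symmetry. apply pd1_formula; auto.
  - apply deriv_tmul. unfold h.
    change (continuity_pt ((comp (fun z => pd f 0 ((z, 0), (b, 0))) (fun t => sqrt (x * x + t * t)))
                            / (fun t => sqrt (x * x + t * t)))%F 0).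
    apply continuity_pt_div.
    + apply continuity_pt_comp. apply cont_rho; auto.
      rewrite Hsq. apply cont_line0. apply sm_cont1; auto. unfold bidisc, Cnorm2; simpl; nra.
    + apply cont_rho; auto.
    + rewrite Hsq; lra.
Qed.

Lemma levi_e1 g p : levi g p ((1, 0), (0, 0)) = / 4 * (pd2 g 0 0 p + pd2 g 1 1 p).
Proof. unfold levi, ddbar, Cmul, Cconj, wcomp. simpl fst. simpl snd. simpl Nat.mul. simpl Nat.add. ring. Qed.

Lemma core_pos f x b : smooth_bidisc f -> T_invariant f -> strictly_psh_bidisc f ->
  0 < x -> x < 1 -> b * b < 1 -> 0 < pd f 0 ((x, 0), (b, 0)).
Proof.
  intros Hs HT Hp Hx Hx1 Hb.
  set (u := fun z => pd f 0 ((z, 0), (b, 0))).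
  set (psi := fun z => z * u z).
  set (psi' := fun z => 1 * u z + z * pd2 f 0 0 ((z, 0), (b, 0))).
  destruct (MVT_cor2 psi psi' 0 x Hx) as [c [Hc [Hc0 Hcx]]].
  - intros c Hc. unfold psi, psi'.
    apply (derivable_pt_lim_mult id u). apply derivable_pt_lim_id.
    unfold u. assert (H := sm_pd2 f 0 0 ((c, 0), (b, 0)) Hs ltac:(auto) ltac:(auto)).
    unfold has_pd in H; simpl in H. apply H. unfold bidisc, Cnorm2; simpl; nra.
  - assert (Hbd : bidisc ((c, 0), (b, 0))) by (unfold bidisc, Cnorm2; simpl; nra).
    assert (Hl := Hp _ Hbd ((1, 0), (0, 0))).
    rewrite levi_e1 in Hl.
    assert (Hne : ((1, 0), (0, 0)) <> ((0, 0), (0, 0)) :> C2).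
    { intro E. injection E. lra. }
    specialize (Hl Hne).
    rewrite pd2_11 in Hl by (auto; lra).
    assert (0 < psi' c).
    { unfold psi', u. fold (u c) in *.
      replace (1 * u c + c * pd2 f 0 0 (c, 0, (b, 0))) with (c * (pd2 f 0 0 (c, 0, (b, 0)) + u c / c)) by (field; lra).
      apply Rmult_lt_0_compat; lra. }
    unfold psi in Hc. rewrite Rmult_0_l, Rminus_0_r, Rminus_0_r in Hc.
    assert (0 < x * u x) by (rewrite Hc; apply Rmult_lt_0_compat; lra).
    unfold u in *. nra.
Qed.

Definition P (a b : R) : C2 := ((tanh a, 0), (tanh b, 0)).

Lemma bidiscP a b : bidisc (P a b).
Proof. unfold bidisc, Cnorm2, P; simpl. split; apply tanh_bound. Qed.

Lemma ftD1 f a1 a2 : smooth_bidisc f ->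
  derivable_pt_lim (fun t => ftilde f t a2) a1 (pd f 0 (P a1 a2) * / (cosh a1 * cosh a1)).
Proof.
  intros Hs. change (fun t => ftilde f t a2) with (comp (fun z => f ((z, 0), (tanh a2, 0))) tanh).
  apply derivable_pt_lim_comp. apply deriv_tanh.
  exact (sm_pd f 0 (P a1 a2) Hs ltac:(auto) (bidiscP a1 a2)).
Qed.

Lemma ftD2 f a1 a2 : smooth_bidisc f ->
  derivable_pt_lim (fun t => ftilde f a1 t) a2 (pd f 2 (P a1 a2) * / (cosh a2 * cosh a2)).
Proof.
  intros Hs. change (fun t => ftilde f a1 t) with (comp (fun z => f ((tanh a1, 0), (z, 0))) tanh).
  apply derivable_pt_lim_comp. apply deriv_tanh.
  exact (sm_pd f 2 (P a1 a2) Hs ltac:(auto) (bidiscP a1 a2)).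
Qed.

Lemma ft_sym f a b : S2_invariant f -> ftilde f a b = ftilde f b a.
Proof. intros HS. unfold ftilde. symmetry. exact (HS (P a b) (bidiscP a b)). Qed.

Lemma ft_even1 f a b : T_invariant f -> ftilde f (- a) b = ftilde f a b.
Proof.
  intros HT. unfold ftilde.
  transitivity (f (rot PI (fst (P a b)), rot 0 (snd (P a b)))).
  2: exact (HT (P a b) PI 0 (bidiscP a b)).
  f_equal. unfold rot, P; simpl. rewrite cos_PI, sin_PI, cos_0, sin_0, tanh_opp.
  apply injective_projections; simpl; (apply injective_projections; simpl); ring.
Qed.

Lemma ft_even2 f a b : T_invariant f -> S2_invariant f -> ftilde f a (- b) = ftilde f a b.
Proof. intros HT HS. rewrite ft_sym, ft_even1, ft_sym; auto. Qed.

Lemma D2_D1 f a1 a2 : S2_invariant f -> D2 (ftilde f) a1 a2 = D1 (ftilde f) a2 a1.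
Proof.
  intros HS. unfold D1, D2.
  replace (fun t => ftilde f a1 t) with (fun t => ftilde f t a1); auto.
  apply functional_extensionality; intro; apply ft_sym; auto.
Qed.

Lemma D1_val f a1 a2 : smooth_bidisc f ->
  D1 (ftilde f) a1 a2 = pd f 0 (P a1 a2) * / (cosh a1 * cosh a1).
Proof. intros Hs. apply D1_eq, ftD1; auto. Qed.

Lemma D1_odd f a b : smooth_bidisc f -> T_invariant f ->
  D1 (ftilde f) (- a) b = - D1 (ftilde f) a b.
Proof.
  intros Hs HT. apply D1_eq. rewrite D1_val by auto.
  apply (even_deriv (fun t => ftilde f t b)). intro; apply ft_even1; auto.
  apply ftD1; auto.
Qed.

Lemma D1_even2 f a b : T_invariant f -> S2_invariant f ->
  D1 (ftilde f) a (- b) = D1 (ftilde f) a b.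
Proof.
  intros HT HS. unfold D1.
  replace (fun t => ftilde f t (- b)) with (fun t => ftilde f t b); auto.
  apply functional_extensionality; intro; rewrite ft_even2; auto.
Qed.

Lemma D1_pos f a b : smooth_bidisc f -> T_invariant f -> strictly_psh_bidisc f ->
  0 < a -> 0 < D1 (ftilde f) a b.
Proof.
  intros Hs HT Hp Ha. rewrite D1_val by auto.
  apply Rmult_lt_0_compat.
  - unfold P. apply core_pos; auto.
    + apply tanh_pos; auto.
    + assert (H := tanh_bound a). assert (0 < tanh a) by (apply tanh_pos; auto). nra.
    + assert (H := tanh_bound b). lra.
  - apply Rinv_0_lt_compat. generalize (cosh_pos a); intro; nra.
Qed.

Lemma D1_zero f b : smooth_bidisc f -> T_invariant f -> D1 (ftilde f) 0 b = 0.
Proof.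
  intros Hs HT. assert (H := D1_odd f 0 b Hs HT). rewrite Ropp_0 in H. lra.
Qed.

Lemma cont_line2 g c x : cont_at g ((c, 0), (x, 0)) -> continuity_pt (fun z => g ((c, 0), (z, 0))) x.
Proof.
  intros H. apply cpt_intro. intros eps He. destruct (H eps He) as [d [Hd Hq]].
  exists d; split; auto. intros y Hy. apply Hq. intros i Hi.
  destruct i as [|[|[|[|i]]]]; simpl; auto; unfold Rminus; rewrite Rplus_opp_r, Rabs_R0; auto.
Qed.

Lemma cont_P1 g a b : cont_at g (P a b) -> continuity_pt (fun z => g (P z b)) a.
Proof.
  intros H. change (fun z => g (P z b)) with (comp (fun w => g ((w, 0), (tanh b, 0))) tanh).
  apply continuity_pt_comp. apply cont_tanh. apply cont_line0. exact H.
Qed.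

Lemma cont_P2 g a b : cont_at g (P a b) -> continuity_pt (fun z => g (P a z)) b.
Proof.
  intros H. change (fun z => g (P a z)) with (comp (fun w => g ((tanh a, 0), (w, 0))) tanh).
  apply continuity_pt_comp. apply cont_tanh. apply cont_line2. exact H.
Qed.

Lemma cont_shift k a : continuity_pt k a -> continuity_pt (fun t => k (a + t)) 0.
Proof.
  intros H. change (fun t => k (a + t)) with (comp k (fun t => a + t)).
  apply continuity_pt_comp.
  - apply derivable_continuous_pt. exists (0 + 1).
    apply (derivable_pt_lim_plus (fun _ => a) id). apply derivable_pt_lim_const. apply derivable_pt_lim_id.
  - rewrite Rplus_0_r; auto.
Qed.

Lemma cont_cosh x : continuity_pt cosh x.
Proof. apply derivable_continuous_pt, derivable_pt_cosh. Qed.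
Lemma cont_sinh x : continuity_pt sinh x.
Proof. apply derivable_continuous_pt, derivable_pt_sinh. Qed.

Lemma cont_icosh2 x : continuity_pt (fun z => / (cosh z * cosh z)) x.
Proof.
  change (fun z => / (cosh z * cosh z)) with (/ (cosh * cosh))%F.
  apply continuity_pt_inv. apply continuity_pt_mult; apply cont_cosh.
  unfold mult_fct. generalize (cosh_pos x); intro; nra.
Qed.

Lemma cont_sinh2 x : continuity_pt (fun z => sinh (2 * z)) x.
Proof.
  change (fun z => sinh (2 * z)) with (comp sinh (fun z => 2 * z)).
  apply continuity_pt_comp. 2: apply cont_sinh.
  apply derivable_continuous_pt. exists (0 * x + 2 * 1).
  apply (derivable_pt_lim_mult (fun _ => 2) id). apply derivable_pt_lim_const. apply derivable_pt_lim_id.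
Qed.

Lemma cont_sinhsq c x : continuity_pt (fun z => sinh z ^ 2 - c) x.
Proof.
  change (fun z => sinh z ^ 2 - c) with ((sinh * (sinh * fct_cte 1)) - fct_cte c)%F.
  apply continuity_pt_minus. apply continuity_pt_mult. apply cont_sinh.
  apply continuity_pt_mult. apply cont_sinh. apply continuity_pt_const; intros ? ?; reflexivity.
  apply continuity_pt_const; intros ? ?; reflexivity.
Qed.

Theorem lemma2p5 (f : C2 -> R) (r s : R)
  (Hsmooth : smooth_bidisc f)
  (HT : T_invariant f) (HS : S2_invariant f)
  (Hpsh : strictly_psh_bidisc f) :
  let ft := ftilde f in
  (* partial derivatives of ft exist *)
  (forall a1 a2, exists l, derivable_pt_lim (fun t => ft t a2) a1 l) /\
  (forall a1 a2, exists l, derivable_pt_lim (fun t => ft a1 t) a2 l) /\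
  (* (i) *)
  (forall a1 a2, 0 < a1 -> 0 < D1 ft a1 a2) /\
  (forall a1 a2, a1 < 0 -> D1 ft a1 a2 < 0) /\
  (forall a2, D1 ft 0 a2 = 0) /\
  (* (ii) *)
  (forall a1 a2, D2 ft a1 a2 = D1 ft a2 a1) /\
  (forall a1, D2 ft a1 0 = 0) /\
  (* (iii) *)
  ((exists H : R -> R -> R, cont2 H /\ (forall a1 a2, 0 < H a1 a2) /\
      forall a1 a2, sinh a1 ^ 2 <> sinh a2 ^ 2 -> H a1 a2 = Gfun r s ft a1 a2) ->
   r = s /\ 0 < r /\
   (forall a1 a2, sinh a1 ^ 2 <> sinh a2 ^ 2 ->
      Gfun r s ft a2 a1 = Gfun r s ft a1 a2 /\
      Gfun r s ft (- a1) a2 = Gfun r s ft a1 a2 /\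
      Gfun r s ft a1 (- a2) = Gfun r s ft a1 a2)).
Proof.
  intros ft. subst ft.
  split; [intros; eexists; apply ftD1; auto|].
  split; [intros; eexists; apply ftD2; auto|].
  split; [intros; apply D1_pos; auto|].
  split.
  { intros a1 a2 Ha. assert (E := D1_odd f (- a1) a2 Hsmooth HT).
    rewrite Ropp_involutive in E. rewrite E.
    assert (0 < D1 (ftilde f) (- a1) a2) by (apply D1_pos; auto; lra). lra. }
  split; [intros; apply D1_zero; auto|].
  split; [intros; apply D2_D1; auto|].
  split; [intros; rewrite D2_D1 by auto; apply D1_zero; auto|].
  intros [H [Hc [Hpos Hag]]].
  assert (Hs1 : 0 < sinh 1) by (apply sinh_pos; lra).
  assert (Hr : 0 < r).
  { assert (Hne : sinh 1 ^ 2 <> sinh 0 ^ 2) by (rewrite sinh_0; nra).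
    assert (E := Hag 1 0 Hne). unfold Gfun in E.
    rewrite Rmult_0_r, sinh_0 in E.
    assert (0 < sinh (2 * 1)) by (apply sinh_pos; lra).
    assert (0 < D1 (ftilde f) 1 0) by (apply D1_pos; auto; lra).
    assert (HH := Hpos 1 0).
    assert (E2 : r * (sinh (2 * 1) * D1 (ftilde f) 1 0) = H 1 0 * (sinh 1 ^ 2)).
    { rewrite E. field. nra. }
    assert (0 < H 1 0 * sinh 1 ^ 2) by (apply Rmult_lt_0_compat; nra).
    assert (HA : 0 < sinh (2 * 1) * D1 (ftilde f) 1 0) by (apply Rmult_lt_0_compat; auto).
    apply (Rmult_lt_reg_r _ _ _ HA). rewrite Rmult_0_l. lra. }
  assert (Hrs : r = s).
  { set (u := fun t => r * sinh (2 * (1 + t)) * D1 (ftilde f) (1 + t) 1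
                     - s * sinh (2 * 1) * D1 (ftilde f) 1 (1 + t)).
    set (v := fun t => H (1 + t) 1 * (sinh (1 + t) ^ 2 - sinh 1 ^ 2)).
    assert (Huv : u 0 = v 0).
    { apply agree_at0.
      - set (k1 := fun t => sinh (2 * (1 + t))).
        set (k2 := fun t => D1 (ftilde f) (1 + t) 1).
        set (k3 := fun t => D1 (ftilde f) 1 (1 + t)).
        change u with (fct_cte r * k1 * k2 - fct_cte (s * sinh (2 * 1)) * k3)%F.
        assert (C1 : continuity_pt k1 0) by (apply (cont_shift (fun z => sinh (2 * z))), cont_sinh2).
        assert (C2' : continuity_pt k2 0).
        { replace k2 with (fun t => (fun z => pd f 0 (P z 1) * / (cosh z * cosh z)) (1 + t)).
          2: { apply functional_extensionality; intro t; unfold k2; rewrite D1_val; auto. }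
          apply (cont_shift (fun z => pd f 0 (P z 1) * / (cosh z * cosh z)) 1). apply (continuity_pt_mult (fun z => pd f 0 (P z 1)) (fun z => / (cosh z * cosh z))).
          apply cont_P1. apply sm_cont1; auto. apply bidiscP. apply cont_icosh2. }
        assert (C3 : continuity_pt k3 0).
        { replace k3 with (fun t => (fun z => pd f 0 (P 1 z) * / (cosh 1 * cosh 1)) (1 + t)).
          2: { apply functional_extensionality; intro t; unfold k3; rewrite D1_val; auto. }
          apply (cont_shift (fun z => pd f 0 (P 1 z) * / (cosh 1 * cosh 1)) 1). apply (continuity_pt_mult (fun z => pd f 0 (P 1 z)) (fun z => / (cosh 1 * cosh 1))).
          apply cont_P2. apply sm_cont1; auto. apply bidiscP. apply continuity_pt_const; intros ? ?; reflexivity. }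
        apply continuity_pt_minus; apply continuity_pt_mult; auto.
        apply continuity_pt_mult; auto. apply continuity_pt_const; intros ? ?; reflexivity.
        apply continuity_pt_const; intros ? ?; reflexivity.
      - apply (cont_shift (fun z => H z 1 * (sinh z ^ 2 - sinh 1 ^ 2))).
        apply (continuity_pt_mult (fun z => H z 1) (fun z => sinh z ^ 2 - sinh 1 ^ 2)).
        + apply cpt_intro. intros eps He. destruct (Hc 1 1 eps He) as [d [Hd Hq]].
          exists d; split; auto. intros y Hy. apply Hq; auto. unfold Rminus; rewrite Rplus_opp_r, Rabs_R0; auto.
        + apply cont_sinhsq.
      - intros t Ht. unfold u, v.
        assert (sinh 1 < sinh (1 + t)) by (apply sinh_lt; lra).
        assert (Hd : sinh (1 + t) ^ 2 - sinh 1 ^ 2 <> 0) by nra.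
        rewrite Hag by (intro; apply Hd; lra).
        unfold Gfun. rewrite D2_D1 by auto. field. auto. }
    unfold u, v in Huv. rewrite Rplus_0_r in Huv.
    assert (0 < sinh (2 * 1)) by (apply sinh_pos; lra).
    assert (0 < D1 (ftilde f) 1 1) by (apply D1_pos; auto; lra).
    assert (E : (r - s) * (sinh (2 * 1) * D1 (ftilde f) 1 1) = 0) by (replace ((r - s) * (sinh (2 * 1) * D1 (ftilde f) 1 1)) with (r * sinh (2 * 1) * D1 (ftilde f) 1 1 - s * sinh (2 * 1) * D1 (ftilde f) 1 1) by ring; rewrite Huv; ring).
    apply Rmult_integral in E. destruct E as [E|E]; nra. }
  subst s. split; auto. split; auto.
  intros a1 a2 Hne.
  assert (Hd : sinh a1 ^ 2 - sinh a2 ^ 2 <> 0) by (intro; apply Hne; lra).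
  assert (Hd' : sinh a2 ^ 2 - sinh a1 ^ 2 <> 0) by (intro; apply Hne; lra).
  unfold Gfun. split; [|split].
  - rewrite !D2_D1 by auto. field; auto.
  - rewrite !D2_D1 by auto. rewrite D1_even2, D1_odd by auto.
    replace (2 * - a1) with (- (2 * a1)) by ring. rewrite !sinh_opp. field; auto.
  - rewrite !D2_D1 by auto. rewrite D1_even2, D1_odd by auto.
    replace (2 * - a2) with (- (2 * a2)) by ring. rewrite !sinh_opp. field; auto.
Qed.
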